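(* Let $h\ge2$ and let $r_1<s_1<r_2<s_2<\dots<s_{h-1}<r_h$ be real numbers. Let $P\in\mathbb{R}[X]$ be a polynomial of degree $2h$ with positive leading coefficient such that $P(X)>0$ for all $X\in\mathbb{R}$ and $P'(X)=c\,(X-r_h)\prod_{j=1}^{h-1}(X-r_j)(X-s_j)$ for some constant $c>0$. Write $P(X)=\kappa\prod_{j=1}^h\big((X-a_j)^2+b_j^2\big)$ with $\kappa>0$, $a_j,b_j\in\mathbb{R}$, $b_j>0$. Identify $\mathbb{R}^3=\mathbb{C}\times\mathbb{R}$, let $\xi=e^{2\pi i/3}$, and set $w_j^i=(\xi^ib_j,a_j)$ for $1\le j\le h$, $1\le i\le 3$. Let $F(x)=\prod_{j=1}^h\prod_{i=1}^3|x-w_j^i|^2$. Then the $3h$ points $w_j^i$ are pairwise distinct and: (1) the points $(0,r_j)$, $1\le j\le h$, are nondegenerate local minima of $F$ which are not absolute minima; (2) the points $(0,s_j)$, $1\le j\le h-1$, are nondegenerate critical points of $F$ of negativity index $1$; (3) the $3h$ points $w_j^i$ are the absolute minima of $F$.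
   Context: $|\cdot|$ is the Euclidean norm on $\mathbb{R}^3$. The negativity index of a nondegenerate critical point is the number of negative eigenvalues of the Hessian. *)

(* Defs.v *)
From Stdlib Require Import Reals Lra.
Open Scope R_scope.

(* R^3, identified with C x R as (Re z, Im z, t). *)
Definition R3 : Type := (R * R * R)%type.

Definition c1 (x : R3) : R := fst (fst x).
Definition c2 (x : R3) : R := snd (fst x).
Definition c3 (x : R3) : R := snd x.

Definition coord (i : nat) (x : R3) : R :=
  match i with 0%nat => c1 x | 1%nat => c2 x | _ => c3 x end.

Definition vadd (x y : R3) : R3 := (c1 x + c1 y, c2 x + c2 y, c3 x + c3 y).
Definition vscale (t : R) (x : R3) : R3 := (t * c1 x, t * c2 x, t * c3 x).
Definition dot (x y : R3) : R := c1 x * c1 y + c2 x * c2 y + c3 x * c3 y.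

Definition dist2 (x y : R3) : R :=
  (c1 x - c1 y) ^ 2 + (c2 x - c2 y) ^ 2 + (c3 x - c3 y) ^ 2.
Definition dist (x y : R3) : R := sqrt (dist2 x y).

Definition e (i : nat) : R3 :=
  match i with 0%nat => (1, 0, 0) | 1%nat => (0, 1, 0) | _ => (0, 0, 1) end.

Fixpoint prodR (n : nat) (f : nat -> R) : R :=
  match n with
  | O => 1
  | S m => prodR m f * f (S m)
  end.

Definition partial_at (f : R3 -> R) (i : nat) (x : R3) (l : R) : Prop :=
  derivable_pt_lim (fun t => f (vadd x (vscale t (e i)))) 0 l.

Definition critical_point (f : R3 -> R) (x : R3) : Prop :=
  forall i, (i < 3)%nat -> partial_at f i x 0.

Definition is_hessian (f : R3 -> R) (x : R3) (H : nat -> nat -> R) : Prop :=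
  exists g : nat -> R3 -> R,
    (forall i y, (i < 3)%nat -> partial_at f i y (g i y)) /\
    (forall i j, (i < 3)%nat -> (j < 3)%nat -> partial_at (g i) j x (H i j)).

Definition det3 (H : nat -> nat -> R) : R :=
    H 0%nat 0%nat * (H 1%nat 1%nat * H 2%nat 2%nat - H 1%nat 2%nat * H 2%nat 1%nat)
  - H 0%nat 1%nat * (H 1%nat 0%nat * H 2%nat 2%nat - H 1%nat 2%nat * H 2%nat 0%nat)
  + H 0%nat 2%nat * (H 1%nat 0%nat * H 2%nat 1%nat - H 1%nat 1%nat * H 2%nat 0%nat).

Definition matvec (H : nat -> nat -> R) (v : R3) : R3 :=
  (H 0%nat 0%nat * c1 v + H 0%nat 1%nat * c2 v + H 0%nat 2%nat * c3 v,
   H 1%nat 0%nat * c1 v + H 1%nat 1%nat * c2 v + H 1%nat 2%nat * c3 v,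
   H 2%nat 0%nat * c1 v + H 2%nat 1%nat * c2 v + H 2%nat 2%nat * c3 v).

Definition nondegenerate_critical_point (f : R3 -> R) (x : R3) : Prop :=
  critical_point f x /\ exists H, is_hessian f x H /\ det3 H <> 0.

Definition is_neg (t : R) : nat := if Rlt_dec t 0 then 1%nat else 0%nat.

(* H (symmetric 3x3) has exactly k negative eigenvalues counted with
   multiplicity: the eigenvalues in an orthonormal eigenbasis. *)
Definition num_neg_eigenvalues (H : nat -> nat -> R) (k : nat) : Prop :=
  exists (v : nat -> R3) (lam : nat -> R),
    (forall m n, (m < 3)%nat -> (n < 3)%nat ->
        dot (v m) (v n) = if Nat.eqb m n then 1 else 0) /\
    (forall m, (m < 3)%nat -> matvec H (v m) = vscale (lam m) (v m)) /\
    (is_neg (lam 0%nat) + is_neg (lam 1%nat) + is_neg (lam 2%nat) = k)%nat.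

Definition negativity_index (f : R3 -> R) (x : R3) (k : nat) : Prop :=
  exists H, is_hessian f x H /\ num_neg_eigenvalues H k.

Definition local_min (f : R3 -> R) (x : R3) : Prop :=
  exists delta, delta > 0 /\ forall y, dist y x < delta -> f x <= f y.

Definition absolute_min (f : R3 -> R) (x : R3) : Prop :=
  forall y, f x <= f y.

Definition wpt (a b : nat -> R) (j i : nat) : R3 :=
  (b j * cos (2 * PI * INR i / 3), b j * sin (2 * PI * INR i / 3), a j).

Definition Ffun (h : nat) (a b : nat -> R) (x : R3) : R :=
  prodR h (fun j => prodR 3 (fun i => dist2 x (wpt a b j i))).

(* Main.v *)
Require Import Defs.
From Stdlib Require Import Reals.
Open Scope R_scope.
From Stdlib Require Import Lra Lia Psatz FunctionalExtensionality Classical.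


Lemma prodR_ext n f g : (forall j, (1 <= j <= n)%nat -> f j = g j) -> prodR n f = prodR n g.
Proof. induction n; simpl; intros H; auto. rewrite IHn, (H (S n)); auto; try lia. intros; apply H; lia. Qed.

Lemma prodR_mult n f g : prodR n (fun j => f j * g j) = prodR n f * prodR n g.
Proof. induction n; simpl. ring. rewrite IHn; ring. Qed.

Lemma prodR_pos n f : (forall j, (1 <= j <= n)%nat -> f j > 0) -> prodR n f > 0.
Proof. induction n; simpl; intros H. lra. apply Rmult_lt_0_compat. apply IHn; intros; apply H; lia. apply H; lia. Qed.

Lemma prodR_nonneg n f : (forall j, (1 <= j <= n)%nat -> f j >= 0) -> prodR n f >= 0.
Proof. induction n; simpl; intros H. lra. assert (prodR n f >= 0) by (apply IHn; intros; apply H; lia).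
 assert (f (S n) >= 0) by (apply H; lia). nra. Qed.

Lemma prodR_le n f g : (forall j, (1 <= j <= n)%nat -> 0 <= f j <= g j) -> prodR n f <= prodR n g.
Proof. induction n; simpl; intros H. lra.
 assert (prodR n f <= prodR n g) by (apply IHn; intros; apply H; lia).
 assert (prodR n f >= 0) by (apply prodR_nonneg; intros; assert (0 <= f j <= g j) by (apply H; lia); lra).
 assert (0 <= f (S n) <= g (S n)) by (apply H; lia). nra. Qed.

Lemma prodR_zero n f m : (1 <= m <= n)%nat -> f m = 0 -> prodR n f = 0.
Proof. induction n; simpl; intros Hm Hf. lia. destruct (Nat.eq_dec m (S n)). subst; rewrite Hf; ring.
 rewrite IHn; try lia; auto; ring. Qed.

Lemma prodR_zero_inv n f : prodR n f = 0 -> exists j, (1 <= j <= n)%nat /\ f j = 0.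
Proof. induction n; simpl; intros H. lra. apply Rmult_integral in H. destruct H as [H|H].
 destruct (IHn H) as [j [Hj Hf]]. exists j; split; auto; lia. exists (S n); split; auto; lia. Qed.

Lemma prodR_extract n f m : (1 <= m <= n)%nat ->
  prodR n f = f m * prodR n (fun j => if Nat.eqb j m then 1 else f j).
Proof. induction n; intros Hm. lia.
 change (prodR (S n) f) with (prodR n f * f (S n)).
 change (prodR (S n) (fun j => if Nat.eqb j m then 1 else f j)) with
   (prodR n (fun j => if Nat.eqb j m then 1 else f j) * (if Nat.eqb (S n) m then 1 else f (S n))).
 destruct (Nat.eq_dec m (S n)).
 - subst. rewrite Nat.eqb_refl. rewrite (prodR_ext n (fun j => if Nat.eqb j (S n) then 1 else f j) f). ring.
   intros j Hj. destruct (Nat.eqb_spec j (S n)); auto; lia.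
 - rewrite (IHn ltac:(lia)). destruct (Nat.eqb_spec (S n) m); try lia. ring. Qed.

Lemma prodR_ge1 n f : (forall j, (1 <= j <= n)%nat -> f j >= 1) -> prodR n f >= 1.
Proof. induction n; simpl; intros H. lra. assert (prodR n f >= 1) by (apply IHn; intros; apply H; lia).
 assert (f (S n) >= 1) by (apply H; lia). nra. Qed.

Fixpoint sumR (n : nat) (f : nat -> R) : R := match n with O => 0 | S m => sumR m f + f (S m) end.

Lemma sumR_scal n w f : sumR n (fun j => w * f j) = w * sumR n f.
Proof. induction n; simpl. ring. rewrite IHn; ring. Qed.

Lemma sumR_nonneg n f : (forall j, (1 <= j <= n)%nat -> 0 <= f j) -> 0 <= sumR n f.
Proof. induction n; simpl; intros H. lra. assert (0 <= sumR n f) by (apply IHn; intros; apply H; lia).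
 assert (0 <= f (S n)) by (apply H; lia). lra. Qed.

Lemma prodR_weier n x : (forall j, (1 <= j <= n)%nat -> 0 <= x j) -> sumR n x <= 1 ->
  prodR n (fun j => 1 - x j) >= 1 - sumR n x.
Proof. induction n; simpl; intros H Hs. lra.
 assert (0 <= x (S n)) by (apply H; lia).
 assert (0 <= sumR n x) by (apply sumR_nonneg; intros; apply H; lia).
 assert (IH : prodR n (fun j => 1 - x j) >= 1 - sumR n x) by (apply IHn; [intros; apply H; lia| lra]).
 nra. Qed.

Fixpoint dP (n : nat) (f fd : nat -> R) : R :=
  match n with O => 0 | S m => dP m f fd * f (S m) + prodR m f * fd (S m) end.

Fixpoint ddP (n : nat) (f fk fi fik : nat -> R) : R :=
  match n with O => 0 | S m => ddP m f fk fi fik * f (S m) + dP m f fi * fk (S m)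
     + dP m f fk * fi (S m) + prodR m f * fik (S m) end.

Lemma dprod_lim n (f : nat -> R -> R) (fd : nat -> R) x :
  (forall j, derivable_pt_lim (f j) x (fd j)) ->
  derivable_pt_lim (fun t => prodR n (fun j => f j t)) x (dP n (fun j => f j x) fd).
Proof. intros H. induction n; simpl. apply derivable_pt_lim_const.
 apply (derivable_pt_lim_mult (fun t => prodR n (fun j => f j t)) (f (S n)) x); auto. Qed.

Lemma ddprod_lim n (f fi : nat -> R -> R) (fk fik : nat -> R) x :
  (forall j, derivable_pt_lim (f j) x (fk j)) ->
  (forall j, derivable_pt_lim (fi j) x (fik j)) ->
  derivable_pt_lim (fun t => dP n (fun j => f j t) (fun j => fi j t)) x
     (ddP n (fun j => f j x) fk (fun j => fi j x) fik).
Proof. intros H1 H2. induction n; simpl. apply derivable_pt_lim_const.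
 replace (ddP n (fun j => f j x) fk (fun j => fi j x) fik * f (S n) x +
   dP n (fun j => f j x) (fun j => fi j x) * fk (S n) +
   dP n (fun j => f j x) fk * fi (S n) x + prodR n (fun j => f j x) * fik (S n))
 with ((ddP n (fun j => f j x) fk (fun j => fi j x) fik * f (S n) x +
   dP n (fun j => f j x) (fun j => fi j x) * fk (S n)) +
   (dP n (fun j => f j x) fk * fi (S n) x + prodR n (fun j => f j x) * fik (S n))) by ring.
 apply (derivable_pt_lim_plus (fun t => dP n (fun j => f j t) (fun j => fi j t) * f (S n) t)
   (fun t => prodR n (fun j => f j t) * fi (S n) t)).
 apply (derivable_pt_lim_mult (fun t => dP n (fun j => f j t) (fun j => fi j t)) (f (S n)) x); auto.
 apply (derivable_pt_lim_mult (fun t => prodR n (fun j => f j t)) (fi (S n)) x); auto.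
 apply dprod_lim; auto. Qed.

Lemma dP_zero n f : dP n f (fun _ => 0) = 0.
Proof. induction n; simpl; auto. rewrite IHn; ring. Qed.

Lemma ddP_fi0 n f fk fik : ddP n f fk (fun _ => 0) fik = dP n f fik.
Proof. induction n; simpl; auto. rewrite IHn, dP_zero; ring. Qed.

Lemma ddP_zero2 n f fi : ddP n f (fun _ => 0) fi (fun _ => 0) = 0.
Proof. induction n; simpl; auto. rewrite IHn, dP_zero; ring. Qed.

Lemma dP_ext n f g fd gd : (forall j, (1 <= j <= n)%nat -> f j = g j /\ fd j = gd j) -> dP n f fd = dP n g gd.
Proof. induction n; simpl; intros H; auto. rewrite IHn by (intros; apply H; lia).
 rewrite (prodR_ext n f g) by (intros; apply H; lia). destruct (H (S n)) as [-> ->]; auto; lia. Qed.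

Lemma dP_scal n f k fd : dP n f (fun j => k * fd j) = k * dP n f fd.
Proof. induction n; simpl. ring. rewrite IHn; ring. Qed.

Lemma dP_nonneg n f fd : (forall j, (1 <= j <= n)%nat -> f j > 0 /\ fd j >= 0) -> dP n f fd >= 0.
Proof. induction n; simpl; intros H. lra.
 assert (dP n f fd >= 0) by (apply IHn; intros; apply H; lia).
 assert (prodR n f > 0) by (apply prodR_pos; intros; apply H; lia).
 destruct (H (S n)); try lia. nra. Qed.

Lemma dP_pos n f fd m : (forall j, (1 <= j <= n)%nat -> f j > 0 /\ fd j >= 0) ->
  (1 <= m <= n)%nat -> fd m > 0 -> dP n f fd > 0.
Proof. induction n; simpl; intros H Hm Hfm. lia.
 assert (dP n f fd >= 0) by (apply dP_nonneg; intros; apply H; lia).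
 assert (prodR n f > 0) by (apply prodR_pos; intros; apply H; lia).
 destruct (H (S n)) as [Hf1 Hf2]; try lia.
 destruct (Nat.eq_dec m (S n)). subst. nra.
 assert (dP n f fd > 0) by (apply IHn; auto; try lia; intros; apply H; lia). nra. Qed.


Definition Ej (a b : R) (y : R3) : R :=
  let u := Defs.c1 y ^ 2 + Defs.c2 y ^ 2 in let A := u + b^2 + (Defs.c3 y - a)^2 in
  A^3 - 3*b^2*u*A - 2*b^3*(Defs.c1 y^3 - 3*Defs.c1 y*Defs.c2 y^2).

Lemma trig1 : cos (2 * PI * 1 / 3) = -1/2 /\ sin (2 * PI * 1 / 3) = sqrt 3 / 2.
Proof. replace (2 * PI * 1 / 3) with (2 * (PI/3)) by (simpl; field).
 rewrite cos_2a_cos, sin_2a, cos_PI3, sin_PI3. split; field. Qed.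

Lemma trig2 : cos (2 * PI * (1+1) / 3) = -1/2 /\ sin (2 * PI * (1+1) / 3) = - (sqrt 3 / 2).
Proof. replace (2 * PI * (1+1) / 3) with (PI/3 + PI) by (simpl; field).
 rewrite neg_cos, neg_sin, cos_PI3, sin_PI3. split; field. Qed.

Lemma trig3 : cos (2 * PI * (1+1+1) / 3) = 1 /\ sin (2 * PI * (1+1+1) / 3) = 0.
Proof. replace (2 * PI * (1+1+1) / 3) with (2 * PI) by (simpl; field). rewrite cos_2PI, sin_2PI; auto. Qed.

Lemma E_poly (y1 y2 y3 a b s : R) : s * s = 3 ->
 1 * ((y1 - b*(-1/2))^2 + (y2 - b*(s/2))^2 + (y3 - a)^2) *
 ((y1 - b*(-1/2))^2 + (y2 - b*(-(s/2)))^2 + (y3-a)^2) *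
 ((y1 - b*1)^2 + (y2 - b*0)^2 + (y3-a)^2) =
 (y1 ^ 2 + y2 ^ 2 + b ^ 2 + (y3 - a) ^ 2) ^ 3 -
  3 * b ^ 2 * (y1 ^ 2 + y2 ^ 2) * (y1 ^ 2 + y2 ^ 2 + b ^ 2 + (y3 - a) ^ 2) -
  2 * b ^ 3 * (y1 ^ 3 - 3 * y1 * y2 ^ 2).
Proof. intros Hs.
 set (K := (y1 + b/2)^2 + y2^2 + 3/4*b^2 + (y3 - a)^2).
 assert (E1 : (y1 - b*(-1/2))^2 + (y2 - b*(s/2))^2 + (y3 - a)^2 = K - y2*b*s).
 { unfold K. replace ((y2 - b*(s/2))^2) with (y2^2 - y2*b*s + b^2*(s*s)/4) by field. rewrite Hs. field. }
 assert (E2 : (y1 - b*(-1/2))^2 + (y2 - b*(-(s/2)))^2 + (y3 - a)^2 = K + y2*b*s).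
 { unfold K. replace ((y2 - b*(-(s/2)))^2) with (y2^2 + y2*b*s + b^2*(s*s)/4) by field. rewrite Hs. field. }
 rewrite E1, E2.
 assert (Hm : (y2*b*s)^2 = 3*y2^2*b^2) by (replace ((y2*b*s)^2) with (y2^2*b^2*(s*s)) by ring; rewrite Hs; ring).
 transitivity (((y1 - b*1)^2 + (y2 - b*0)^2 + (y3-a)^2) * (K^2 - (y2*b*s)^2)). ring.
 rewrite Hm. unfold K. field. Qed.

Lemma E_eq a b j y : prodR 3 (fun i => dist2 y (wpt a b j i)) = Ej (a j) (b j) y.
Proof. unfold prodR, dist2, wpt, Ej, Defs.c1, Defs.c2, Defs.c3. simpl fst; simpl snd.
 destruct trig1 as [-> ->]. destruct trig2 as [-> ->]. destruct trig3 as [-> ->].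
 apply E_poly. apply sqrt_sqrt; lra. Qed.

Lemma F_eq h a b y : Ffun h a b y = prodR h (fun j => Ej (a j) (b j) y).
Proof. unfold Ffun. apply prodR_ext. intros; apply E_eq. Qed.

Module MC.
From HB Require Import structures.
From mathcomp Require Import all_boot all_order all_algebra.
From mathcomp Require Import Rstruct.
Import GRing.Theory Num.Theory.
Local Open Scope ring_scope.

Lemma prodR_big n (f : nat -> R) : prodR n f = \prod_(i < n) f i.+1.
Proof. elim: n => [|n IH]; first by rewrite big_ord0. by rewrite big_ord_recr /= IH. Qed.

Lemma horner_deriv (p : {poly R}) (x : R) :
  derivable_pt_lim (fun y => p.[y]) x (p^`()).[x].
Proof.
elim/poly_ind: p x => [|p c IH] x.
  have -> : (fun y => (0 : {poly R}).[y]) = (fun _ => 0%R).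
    by apply: functional_extensionality => y; rewrite horner0.
  rewrite deriv0 horner0. exact: derivable_pt_lim_const.
have -> : (fun y => (p * 'X + c%:P).[y]) = (fun y => (p.[y] * y + c)%R).
  by apply: functional_extensionality => y; rewrite hornerMXaddC.
rewrite derivMXaddC hornerD hornerMX.
have H := derivable_pt_lim_plus _ _ x _ _ (derivable_pt_lim_mult _ _ x _ _ (IH x) (derivable_pt_lim_id x)) (derivable_pt_lim_const c x).
rewrite Rmult_1_r Rplus_0_r in H. rewrite addrC. exact: H.
Qed.

Lemma RplusE (x y : R) : Rplus x y = x + y. Proof. by []. Qed.
Lemma RmultE (x y : R) : Rmult x y = x * y. Proof. by []. Qed.
Lemma RminusE (x y : R) : Rminus x y = x - y. Proof. by []. Qed.
Lemma pow2E (x : R) : pow x 2 = x * x. Proof. by rewrite /= Rmult_1_r. Qed.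

Lemma qpos (x a b : R) : b != 0 -> (x - a) * (x - a) + b * b != 0.
Proof.
move=> hb; rewrite -!expr2 paddr_eq0 ?sqr_ge0 //; apply/negP => /andP [_].
by rewrite expr2 mulf_eq0 (negbTE hb).
Qed.

Lemma distinct_Q (h : nat) (r s : nat -> R) (P : R -> R) (c kappa : R) (a b : nat -> R) :
  c <> 0 -> kappa <> 0 ->
  (forall x, derivable_pt_lim P x (Rmult (Rmult c (Rminus x (r h)))
      (prodR (Nat.sub h 1) (fun j => Rmult (Rminus x (r j)) (Rminus x (s j)))))) ->
  (forall x, P x = Rmult kappa (prodR h (fun j => Rplus (pow (Rminus x (a j)) 2) (pow (b j) 2)))) ->
  forall j k, (1 <= j)%coq_nat -> (j <= h)%coq_nat -> (1 <= k)%coq_nat -> (k <= h)%coq_nat -> j <> k ->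
  a j = a k -> b j = b k -> b j <> 0 -> False.
Proof.
move=> hc hk Hder Hfact j k /leP j0 /leP jh /leP k0 /leP kh jk ajk bjk bj0.
pose qp (i : nat) : {poly R} := ('X - (a i)%:P) * ('X - (a i)%:P) + (b i * b i)%:P.
pose Up := \prod_(i < h) qp i.+1.
pose Pp := kappa%:P * Up.
pose Lp := \prod_(i < Nat.sub h 1) (('X - (r i.+1)%:P) * ('X - (s i.+1)%:P)).
pose Dp := c *: (('X - (r h)%:P) * Lp).
have qE i x : (qp i).[x] = (x - a i) * (x - a i) + b i * b i.
  by rewrite /qp !hornerE.
have PE x : Pp.[x] = P x.
  rewrite Hfact prodR_big /Pp hornerM hornerC horner_prod RmultE; congr (_ * _).
  by apply: eq_bigr => i _; rewrite qE RplusE !pow2E !RminusE.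
have DE x : Dp.[x] = Rmult (Rmult c (Rminus x (r h)))
      (prodR (Nat.sub h 1) (fun j => Rmult (Rminus x (r j)) (Rminus x (s j)))).
  rewrite prodR_big /Dp hornerZ hornerM horner_prod !RmultE RminusE hornerXsubC mulrA.
  congr (_ * _); apply: eq_bigr => i _; by rewrite hornerM !hornerXsubC RmultE !RminusE.
have dE x : (Pp^`()).[x] = Dp.[x].
  rewrite DE; apply: (uniqueness_limite (fun y => Pp.[y]) x); last first.
    have -> : (fun y => Pp.[y]) = P by apply: functional_extensionality => y; rewrite PE.
    exact: Hder.
  exact: horner_deriv.
have dpE : Pp^`() = Dp.
  apply/eqP; rewrite -subr_eq0; apply/eqP.
  apply: (roots_geq_poly_eq0 (rs := [seq i%:R | i <- iota 0 (size (Pp^`() - Dp))])).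
  - by apply/allP => y _; rewrite rootE hornerD hornerN dE subrr.
  - rewrite map_inj_uniq ?iota_uniq // => m n /eqP; rewrite eqr_nat => /eqP //.
  - by rewrite size_map size_iota.
have qjk : qp j = qp k by rewrite /qp ajk bjk.
have nj : (j.-1 < h)%N by case: j j0 jh {jk ajk bjk bj0 qjk} => //.
have nk : (k.-1 < h)%N by case: k k0 kh {jk ajk bjk qjk} => //.
pose oj := Ordinal nj. pose ok := Ordinal nk.
have ojk : oj != ok.
  apply/eqP => /(congr1 val) /= E; apply: jk.
  by case: j j0 jh nj oj E {ajk bjk bj0 qjk} => // j' _ _ _ _; case: k k0 kh nk ok => // k' _ _ _ _ /= ->.
pose T := \prod_(i < h | (i != oj) && (i != ok)) qp i.+1.
have Ujk : Up = qp j * (qp j * T).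
  rewrite /Up (bigD1 oj) //= (bigD1 ok) /=; last by rewrite eq_sym.
  have -> : oj.+1 = j by rewrite /= prednK.
  have -> : ok.+1 = k by rewrite /= prednK.
  by rewrite qjk.

have dv : qp j %| Pp^`().
  have -> : Pp = qp j * (qp j * (kappa%:P * T)) by rewrite /Pp Ujk mulrCA; congr (_ * _); rewrite mulrCA.
  rewrite derivM; apply: dvdp_add; last exact: dvdp_mulIl.
  by apply: dvdp_mull; exact: dvdp_mulIl.
have nroot x : ~~ root (qp j) x by rewrite rootE qE qpos //; apply/eqP.
have cop : coprimep (qp j) (('X - (r h)%:P) * Lp).
  rewrite coprimepMr coprimep_XsubC nroot /=.
  apply: (big_ind (fun p => coprimep (qp j) p)); first exact: coprimep1.
    by move=> p1 p2 h1 h2; rewrite coprimepMr h1 h2.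
  by move=> i _; rewrite coprimepMr !coprimep_XsubC !nroot.
move: dv; rewrite dpE /Dp dvdpZr; last by apply/eqP.
move=> dv; have := coprimep_dvdl dv cop; rewrite coprimepp => /size_poly1P [c' _ Ec'].
have e1 := qE j (a j); have e2 := qE j (a j + 1).
rewrite Ec' !hornerC in e1 e2; move: e2; rewrite e1 addrAC subrr add0r mulr1.
rewrite mul0r add0r => /eqP; rewrite eq_sym -subr_eq0 addrK oner_eq0 //.
Qed.
End MC.

From Coquelicot Require Import Coquelicot.
Open Scope R_scope.

Definition dE (i : nat) (a b : R) (y : R3) : R :=
  let y1 := Defs.c1 y in let y2 := Defs.c2 y in let y3 := Defs.c3 y in
  let u := y1 ^ 2 + y2 ^ 2 in let A := u + b^2 + (y3 - a)^2 in
  match i with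
  | 0%nat => 3*A^2*(2*y1) - 3*b^2*(2*y1*A + u*(2*y1)) - 2*b^3*(3*y1^2 - 3*y2^2)
  | 1%nat => 3*A^2*(2*y2) - 3*b^2*(2*y2*A + u*(2*y2)) - 2*b^3*(-6*y1*y2)
  | _ => 3*A^2*(2*(y3-a)) - 3*b^2*u*(2*(y3-a))
  end.

Lemma dE_lim i a b y : (i < 3)%nat ->
  derivable_pt_lim (fun t => Ej a b (vadd y (vscale t (e i)))) 0 (dE i a b y).
Proof. intros Hi. destruct y as [[y1 y2] y3]. apply is_derive_Reals.
 unfold Ej, dE, vadd, vscale, Defs.c1, Defs.c2, Defs.c3. simpl fst; simpl snd.
 destruct i as [|[|[|i]]]; simpl; try lia; auto_derive; auto; ring. Qed.

Definition ddE (i k : nat) (a b t0 : R) : R :=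
  let d := t0 - a in let Q := b^2 + d^2 in
  match i, k with
  | 0%nat, 0%nat => 6*Q*d^2
  | 1%nat, 1%nat => 6*Q*d^2
  | 2%nat, 2%nat => 6*Q^2 + 24*d^2*Q
  | _, _ => 0 end.

Lemma ddE_lim i k a b t0 : (i < 3)%nat -> (k < 3)%nat ->
  derivable_pt_lim (fun t => dE i a b (vadd (0,0,t0) (vscale t (e k)))) 0 (ddE i k a b t0).
Proof. intros Hi Hk. apply is_derive_Reals.
 unfold ddE, dE, vadd, vscale, Defs.c1, Defs.c2, Defs.c3. simpl fst; simpl snd.
 destruct i as [|[|[|i]]]; destruct k as [|[|[|k]]]; simpl; try lia; auto_derive; auto; ring. Qed.

Section Main.
Variables (h : nat) (r s : nat -> R) (P : R -> R) (c kappa : R) (a b : nat -> R).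
Hypothesis Hh : (2 <= h)%nat.
Hypothesis Hord : forall j, (1 <= j <= h - 1)%nat -> r j < s j /\ s j < r (S j).
Hypothesis Hpos : forall x, P x > 0.
Hypothesis Hc : c > 0.
Definition Dfun (x : R) : R := c * (x - r h) * prodR (h - 1) (fun j => (x - r j) * (x - s j)).
Hypothesis Hder : forall x, derivable_pt_lim P x (Dfun x).
Hypothesis Hkappa : kappa > 0.
Hypothesis Hb : forall j, (1 <= j <= h)%nat -> b j > 0.
Hypothesis Hfact : forall x, P x = kappa * prodR h (fun j => (x - a j) ^ 2 + b j ^ 2).

Lemma ord_sr j k : (1 <= j)%nat -> (j < k)%nat -> (k <= h)%nat -> s j < r k.
Proof. intros Hj Hjk Hk. induction k. lia. destruct (Nat.eq_dec j k).
 subst. apply Hord; lia. assert (s j < r k) by (apply IHk; lia).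
 destruct (Hord k); try lia. lra. Qed.

Lemma ord_rs j : (1 <= j <= h - 1)%nat -> r j < s j.
Proof. intros; apply Hord; auto. Qed.

Lemma Ej_axis j t : Ej (a j) (b j) (0, 0, t) = ((t - a j) ^ 2 + b j ^ 2) ^ 3.
Proof. unfold Ej, Defs.c1, Defs.c2, Defs.c3; simpl. ring. Qed.

Lemma prodR_pow3 n f : prodR n (fun j => f j ^ 3) = (prodR n f) ^ 3.
Proof. induction n. simpl; ring.
 change (prodR (S n) (fun j => f j ^ 3)) with (prodR n (fun j => f j ^ 3) * f (S n) ^ 3).
 change (prodR (S n) f) with (prodR n f * f (S n)). rewrite IHn; ring. Qed.

Lemma F_axis t : Ffun h a b (0, 0, t) = (P t / kappa) ^ 3.
Proof. rewrite F_eq. rewrite (prodR_ext h _ (fun j => ((t - a j) ^ 2 + b j ^ 2) ^ 3)) by (intros; apply Ej_axis).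
 rewrite (prodR_pow3 h (fun j => (t - a j) ^ 2 + b j ^ 2)). rewrite Hfact. f_equal. field. lra. Qed.

Lemma D_root_h : Dfun (r h) = 0.
Proof. unfold Dfun. ring. Qed.

Lemma D_root_1 : Dfun (r 1) = 0.
Proof. unfold Dfun. rewrite (prodR_zero (h - 1) _ 1). ring. lia. ring. Qed.

Lemma Qderiv j x : derivable_pt_lim (fun y => (y - a j) ^ 2 + b j ^ 2) x (2 * (x - a j)).
Proof. apply is_derive_Reals. auto_derive; auto. ring. Qed.

Lemma exists_a_ne t0 : exists j0, (1 <= j0 <= h)%nat /\ a j0 <> t0.
Proof. apply NNPP; intros Hn.
 assert (Hall : forall j, (1 <= j <= h)%nat -> a j = t0).
 { intros j Hj. apply NNPP; intros Hne. apply Hn. exists j; auto. }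
 assert (Hr1h : r 1 < r h).
 { destruct (Hord 1) as [H1 _]; try lia. assert (s 1 < r h) by (apply ord_sr; lia). lra. }
 assert (exists x, Dfun x = 0 /\ x <> t0) as [x [Dx Hx]].
 { destruct (Req_dec (r 1) t0). exists (r h); split. apply D_root_h. lra.
   exists (r 1); split; auto. apply D_root_1. }
 set (Qx := fun j => (x - a j) ^ 2 + b j ^ 2).
 assert (HP : derivable_pt_lim P x (kappa * dP h Qx (fun j => 2 * (x - a j)))).
 { replace P with (mult_real_fct kappa (fun y => prodR h (fun j => (y - a j) ^ 2 + b j ^ 2))).
   apply derivable_pt_lim_scal. apply (dprod_lim h (fun j y => (y - a j) ^ 2 + b j ^ 2)).
   intros; apply Qderiv.
   apply functional_extensionality; intros y. unfold mult_real_fct. rewrite Hfact; auto. }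
 pose proof (uniqueness_limite _ _ _ _ HP (Hder x)) as E. rewrite Dx in E.
 rewrite (dP_ext h Qx Qx _ (fun j => 2 * (x - t0) * 1)) in E.
 2:{ intros j Hj. split; auto. rewrite Hall; auto; ring. }
 rewrite dP_scal in E.
 assert (dP h Qx (fun _ => 1) > 0).
 { apply (dP_pos h Qx (fun _ => 1) 1). intros j Hj. split; [|lra]. unfold Qx.
   apply Rplus_le_lt_0_compat; [apply pow2_ge_0 | apply pow_lt; apply Hb; auto]. lia. lra. }
 assert (x - t0 <> 0) by lra.
 apply Rmult_integral in E. destruct E as [E|E]. lra.
 apply Rmult_integral in E. destruct E as [E|E]. lra. lra. Qed.


Definition psi_r (m : nat) (t : R) : R :=
  if Nat.eqb m h then c * prodR (h - 1) (fun j => (t - r j) * (t - s j))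
  else c * (t - r h) * (t - s m) * prodR (h - 1) (fun j => if Nat.eqb j m then 1 else (t - r j) * (t - s j)).

Lemma D_dec_r m t : (1 <= m <= h)%nat -> Dfun t = (t - r m) * psi_r m t.
Proof. intros Hm. unfold psi_r, Dfun. destruct (Nat.eqb_spec m h).
 subst. ring. rewrite (prodR_extract (h - 1) (fun j => (t - r j) * (t - s j)) m) by lia.
 cbv beta. ring. Qed.

Definition SideR (m : nat) (t : R) : Prop := forall j, (1 <= j <= h - 1)%nat ->
  ((j < m)%nat -> s j < t) /\ ((m <= j)%nat -> t < s j).

Lemma psi_r_pos m t : (1 <= m <= h)%nat -> SideR m t -> psi_r m t > 0.
Proof. intros Hm HS.
 assert (Hfac : forall j, (1 <= j <= h - 1)%nat -> j <> m -> (t - r j) * (t - s j) > 0).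
 { intros j Hj Hjm. pose proof (ord_rs j Hj). destruct (Compare_dec.lt_dec j m).
   - destruct (HS j Hj) as [H1 _]. specialize (H1 l). apply Rmult_lt_0_compat; lra.
   - destruct (HS j Hj) as [_ H2]. assert (t < s j) by (apply H2; lia).
     destruct (HS (j - 1)%nat) as [_ H3]; try lia. assert (t < s (j - 1)%nat) by (apply H3; lia).
     destruct (Hord (j - 1)%nat) as [_ H4]; try lia. replace (S (j - 1)) with j in H4 by lia.
     assert (t - r j < 0) by lra. assert (t - s j < 0) by lra. nra. }
 unfold psi_r. destruct (Nat.eqb_spec m h).
 - subst. apply Rmult_lt_0_compat; auto. apply prodR_pos. intros j Hj. apply Hfac; lia.
 - destruct (HS m) as [_ Hm2]; try lia. specialize (Hm2 (le_n m)).
   assert (s m < r h) by (apply ord_sr; lia).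
   assert (prodR (h - 1) (fun j => if Nat.eqb j m then 1 else (t - r j) * (t - s j)) > 0).
   { apply prodR_pos; intros j Hj; destruct (Nat.eqb_spec j m); [lra | apply Hfac; auto]. }
   assert (t - r h < 0) by lra. assert (t - s m < 0) by lra.
   assert ((t - r h) * (t - s m) > 0) by nra.
   replace (c * (t - r h) * (t - s m)) with (c * ((t - r h) * (t - s m))) by ring.
   apply Rmult_lt_0_compat; auto. apply Rmult_lt_0_compat; auto. Qed.

Lemma SideR_rm m : (1 <= m <= h)%nat -> SideR m (r m).
Proof. intros Hm j Hj; split; intros Hjm.
 - apply ord_sr; lia.
 - destruct (Nat.eq_dec j m). subst; apply ord_rs; auto.
   assert (r m < s m) by (apply ord_rs; lia). assert (s m < r j) by (apply ord_sr; lia).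
   assert (r j < s j) by (apply ord_rs; lia). lra. Qed.

Definition psi_s (m : nat) (t : R) : R :=
  c * (t - r h) * (t - r m) * prodR (h - 1) (fun j => if Nat.eqb j m then 1 else (t - r j) * (t - s j)).

Lemma D_dec_s m t : (1 <= m <= h - 1)%nat -> Dfun t = (t - s m) * psi_s m t.
Proof. intros Hm. unfold psi_s, Dfun.
 rewrite (prodR_extract (h - 1) (fun j => (t - r j) * (t - s j)) m) by lia. cbv beta. ring. Qed.

Lemma psi_s_neg m : (1 <= m <= h - 1)%nat -> psi_s m (s m) < 0.
Proof. intros Hm. unfold psi_s.
 assert (prodR (h - 1) (fun j => if Nat.eqb j m then 1 else (s m - r j) * (s m - s j)) > 0).
 { apply prodR_pos; intros j Hj; destruct (Nat.eqb_spec j m). lra.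
   pose proof (ord_rs j Hj). destruct (Compare_dec.lt_dec j m).
   - assert (s j < r m) by (apply ord_sr; lia). pose proof (ord_rs m Hm).
     apply Rmult_lt_0_compat; lra.
   - assert (s m < r j) by (apply ord_sr; lia).
     assert (s m - r j < 0) by lra. assert (s m - s j < 0) by lra. nra. }
 assert (s m < r h) by (apply ord_sr; lia). pose proof (ord_rs m Hm).
 assert (s m - r h < 0) by lra. assert (s m - r m > 0) by lra.
 assert ((s m - r h) * (s m - r m) < 0) by nra.
 replace (c * (s m - r h) * (s m - r m)) with (c * ((s m - r h) * (s m - r m))) by ring.
 assert (c * ((s m - r h) * (s m - r m)) < 0) by nra. nra. Qed.

Fixpoint minR (n : nat) (g : nat -> R) : R :=
  match n with O => 1 | S k => Rmin (minR k g) (g (S k)) end.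

Lemma minR_le n g j : (1 <= j <= n)%nat -> minR n g <= g j.
Proof. induction n; simpl; intros Hj. lia. destruct (Nat.eq_dec j (S n)).
 subst; apply Rmin_r. eapply Rle_trans. apply Rmin_l. apply IHn; lia. Qed.

Lemma minR_pos n g : (forall j, (1 <= j <= n)%nat -> g j > 0) -> minR n g > 0.
Proof. induction n; simpl; intros H. lra. apply Rmin_glb_lt. apply IHn; intros; apply H; lia. apply H; lia. Qed.

Lemma minR_le1 n g : minR n g <= 1.
Proof. induction n; simpl. lra. eapply Rle_trans. apply Rmin_l. auto. Qed.

Definition DeltaP (m : nat) : R := minR (h - 1) (fun j => Rabs (r m - s j)).

Lemma DeltaP_pos m : (1 <= m <= h)%nat -> DeltaP m > 0.
Proof. intros Hm. apply minR_pos. intros j Hj. destruct (SideR_rm m Hm j Hj) as [H1 H2].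
 apply Rabs_pos_lt. destruct (Compare_dec.lt_dec j m). specialize (H1 l). lra. assert (r m < s j) by (apply H2; lia). lra. Qed.

Lemma SideR_near m t : (1 <= m <= h)%nat -> Rabs (t - r m) < DeltaP m -> SideR m t.
Proof. intros Hm Ht j Hj. pose proof (minR_le (h - 1) (fun j => Rabs (r m - s j)) j Hj) as Hmin.
 fold (DeltaP m) in Hmin. cbv beta in Hmin.
 destruct (SideR_rm m Hm j Hj) as [H1 H2]. split; intros Hjm.
 - specialize (H1 Hjm). revert Ht Hmin. unfold Rabs; destruct (Rcase_abs (t - r m)); destruct (Rcase_abs (r m - s j)); lra.
 - specialize (H2 Hjm). revert Ht Hmin. unfold Rabs; destruct (Rcase_abs (t - r m)); destruct (Rcase_abs (r m - s j)); lra. Qed.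

Lemma P_locmin m t : (1 <= m <= h)%nat -> Rabs (t - r m) < DeltaP m -> P (r m) <= P t.
Proof. intros Hm Ht.
 destruct (Rtotal_order t (r m)) as [Hlt | [Heq | Hgt]].
 - destruct (MVT_cor2 P Dfun t (r m) Hlt (fun x _ => Hder x)) as [xi [E Hxi]].
   assert (SideR m xi) by (apply SideR_near; auto; revert Ht; unfold Rabs;
     destruct (Rcase_abs (t - r m)); destruct (Rcase_abs (xi - r m)); lra).
   pose proof (psi_r_pos m xi Hm H). rewrite (D_dec_r m xi Hm) in E.
   assert ((xi - r m) * psi_r m xi < 0) by (assert (xi - r m < 0) by lra; nra). nra.
 - subst; lra.
 - destruct (MVT_cor2 P Dfun (r m) t Hgt (fun x _ => Hder x)) as [xi [E Hxi]].
   assert (SideR m xi) by (apply SideR_near; auto; revert Ht; unfold Rabs;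
     destruct (Rcase_abs (t - r m)); destruct (Rcase_abs (xi - r m)); lra).
   pose proof (psi_r_pos m xi Hm H). rewrite (D_dec_r m xi Hm) in E.
   assert ((xi - r m) * psi_r m xi > 0) by (assert (xi - r m > 0) by lra; nra). nra. Qed.

Definition gfun (i : nat) (y : R3) : R := dP h (fun j => Ej (a j) (b j) y) (fun j => dE i (a j) (b j) y).

Lemma vadd0 y i : vadd y (vscale 0 (e i)) = y.
Proof. destruct y as [[y1 y2] y3]; destruct i as [|[|i]]; unfold vadd, vscale, e, Defs.c1, Defs.c2, Defs.c3;
 simpl; f_equal; try f_equal; ring. Qed.

Lemma vadd_axis t0 t : vadd (0, 0, t0) (vscale t (e 2)) = (0, 0, t0 + t).
Proof. unfold vadd, vscale, e, Defs.c1, Defs.c2, Defs.c3; simpl; f_equal; try f_equal; ring. Qed.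

Lemma g_partial i y : (i < 3)%nat -> partial_at (Ffun h a b) i y (gfun i y).
Proof. intros Hi. unfold partial_at.
 replace (fun t => Ffun h a b (vadd y (vscale t (e i)))) with
   (fun t => prodR h (fun j => Ej (a j) (b j) (vadd y (vscale t (e i))))) by
   (apply functional_extensionality; intros; symmetry; apply F_eq).
 pose proof (dprod_lim h (fun j t => Ej (a j) (b j) (vadd y (vscale t (e i))))
   (fun j => dE i (a j) (b j) y) 0 (fun j => dE_lim i (a j) (b j) y Hi)) as H.
 cbv beta in H. rewrite vadd0 in H. exact H. Qed.

Definition Hm (t0 : R) (i k : nat) : R :=
  ddP h (fun j => Ej (a j) (b j) (0, 0, t0)) (fun j => dE k (a j) (b j) (0, 0, t0))
    (fun j => dE i (a j) (b j) (0, 0, t0)) (fun j => ddE i k (a j) (b j) t0).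

Lemma gi_partial t0 i k : (i < 3)%nat -> (k < 3)%nat -> partial_at (gfun i) k (0, 0, t0) (Hm t0 i k).
Proof. intros Hi Hk. unfold partial_at, gfun.
 pose proof (ddprod_lim h (fun j t => Ej (a j) (b j) (vadd (0, 0, t0) (vscale t (e k))))
   (fun j t => dE i (a j) (b j) (vadd (0, 0, t0) (vscale t (e k))))
   (fun j => dE k (a j) (b j) (0, 0, t0)) (fun j => ddE i k (a j) (b j) t0) 0
   (fun j => dE_lim k (a j) (b j) (0, 0, t0) Hk) (fun j => ddE_lim i k (a j) (b j) t0 Hi Hk)) as H.
 cbv beta in H. rewrite vadd0 in H. exact H. Qed.

Lemma dE0_axis t0 j : dE 0 (a j) (b j) (0, 0, t0) = 0.
Proof. unfold dE, Defs.c1, Defs.c2, Defs.c3; simpl; ring. Qed.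
Lemma dE1_axis t0 j : dE 1 (a j) (b j) (0, 0, t0) = 0.
Proof. unfold dE, Defs.c1, Defs.c2, Defs.c3; simpl; ring. Qed.

Definition alpha (t0 : R) : R := dP h (fun j => Ej (a j) (b j) (0, 0, t0)) (fun j => ddE 0 0 (a j) (b j) t0).

Definition Hd (t0 : R) (i k : nat) : R :=
  if Nat.eqb i k then (if Nat.eqb i 2 then Hm t0 2 2 else alpha t0) else 0.

Lemma Hm_eq t0 i k : (i < 3)%nat -> (k < 3)%nat -> Hm t0 i k = Hd t0 i k.
Proof. intros Hi Hk. unfold Hm, Hd.
 assert (Z0 : (fun j => dE 0 (a j) (b j) (0, 0, t0)) = (fun _ => 0))
   by (apply functional_extensionality; intros; apply dE0_axis).
 assert (Z1 : (fun j => dE 1 (a j) (b j) (0, 0, t0)) = (fun _ => 0))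
   by (apply functional_extensionality; intros; apply dE1_axis).
 destruct i as [|[|[|i]]]; destruct k as [|[|[|k]]]; try lia; simpl Nat.eqb; cbv iota.
 - rewrite Z0, ddP_fi0. reflexivity.
 - rewrite Z0, ddP_fi0. apply dP_zero.
 - rewrite Z0, ddP_fi0. apply dP_zero.
 - rewrite Z1, ddP_fi0. apply dP_zero.
 - rewrite Z1, ddP_fi0. reflexivity.
 - rewrite Z1, ddP_fi0. apply dP_zero.
 - rewrite Z0. apply ddP_zero2.
 - rewrite Z1. apply ddP_zero2.
 - reflexivity. Qed.

Lemma hess_axis t0 : is_hessian (Ffun h a b) (0, 0, t0) (Hd t0).
Proof. exists gfun. split. intros; apply g_partial; auto.
 intros i k Hi Hk. rewrite <- Hm_eq; auto. apply gi_partial; auto. Qed.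

Lemma alpha_pos t0 : alpha t0 > 0.
Proof. destruct (exists_a_ne t0) as [j0 [Hj0 Ha0]]. unfold alpha.
 apply (dP_pos h _ _ j0); auto.
 - intros j Hj. rewrite Ej_axis. unfold ddE. cbv zeta. assert (b j > 0) by (apply Hb; auto).
   assert (0 < (t0 - a j) ^ 2 + b j ^ 2) by (apply Rplus_le_lt_0_compat; [apply pow2_ge_0 | apply pow_lt; auto]).
   split. apply pow_lt; auto.
   assert (0 <= (t0 - a j) ^ 2) by apply pow2_ge_0. nra.
 - unfold ddE. cbv zeta. assert (b j0 > 0) by (apply Hb; auto).
   assert (0 < (t0 - a j0) ^ 2) by (replace ((t0 - a j0) ^ 2) with (Rsqr (t0 - a j0)) by (unfold Rsqr; ring); apply Rsqr_pos_lt; lra).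
   nra. Qed.

Definition Gp (t : R) : R := 3 * (P t / kappa) ^ 2 * (Dfun t / kappa).

Lemma shift_lim f t0 l : derivable_pt_lim f t0 l -> derivable_pt_lim (fun t => f (t0 + t)) 0 l.
Proof. intros H. replace l with (l * 1) by ring.
 change (fun t => f (t0 + t)) with (comp f (fun t => t0 + t)).
 apply derivable_pt_lim_comp. apply is_derive_Reals; auto_derive; auto; ring.
 rewrite Rplus_0_r; auto. Qed.

Lemma F_partial2_axis t0 : partial_at (Ffun h a b) 2 (0, 0, t0) (Gp t0).
Proof. unfold partial_at.
 replace (fun t => Ffun h a b (vadd (0, 0, t0) (vscale t (e 2)))) with
   (fun t => (fun z => (P z / kappa) ^ 3) (t0 + t)) by
   (apply functional_extensionality; intros; rewrite vadd_axis, F_axis; auto).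
 apply (shift_lim (fun z => (P z / kappa) ^ 3)).
 replace (Gp t0) with ((3 * (P t0 / kappa) ^ 2 * (1 / kappa)) * Dfun t0) by (unfold Gp; field; lra).
 apply (derivable_pt_lim_comp P (fun z => (z / kappa) ^ 3)). apply Hder.
 apply is_derive_Reals. auto_derive. auto. field. lra. Qed.

Lemma g2_axis t0 : gfun 2 (0, 0, t0) = Gp t0.
Proof. apply (uniqueness_limite _ _ _ _ (g_partial 2 (0, 0, t0) ltac:(lia)) (F_partial2_axis t0)). Qed.

Lemma H22_val t0 (psi : R -> R) : (forall t, Dfun t = (t - t0) * psi t) -> ex_derive psi t0 ->
  Hm t0 2 2 = 3 * (P t0 / kappa) ^ 2 * (psi t0 / kappa).
Proof. intros Hdec Hpsi.
 pose proof (gi_partial t0 2 2 ltac:(lia) ltac:(lia)) as H1. unfold partial_at in H1.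
 replace (fun t => gfun 2 (vadd (0, 0, t0) (vscale t (e 2)))) with
   (fun t => (fun z => 3 * (P z / kappa) ^ 2 * ((z - t0) * psi z / kappa)) (t0 + t)) in H1.
 2:{ apply functional_extensionality; intros t. rewrite vadd_axis, g2_axis. unfold Gp. rewrite Hdec. auto. }
 apply (uniqueness_limite _ _ _ _ H1).
 apply (shift_lim (fun z => 3 * (P z / kappa) ^ 2 * ((z - t0) * psi z / kappa))).
 assert (HP : ex_derive P t0) by (exists (Dfun t0); apply is_derive_Reals; apply Hder).
 apply is_derive_Reals. auto_derive. repeat split; auto.
 replace (t0 + - t0) with 0 by ring. field. lra. Qed.

Lemma prodR_ex_derive n (f : nat -> R -> R) x : (forall j, ex_derive (f j) x) ->
  ex_derive (fun t => prodR n (fun j => f j t)) x.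
Proof. intros H. induction n; simpl. apply ex_derive_const.
 apply (ex_derive_mult (fun t => prodR n (fun j => f j t)) (f (S n))); auto. Qed.

Lemma ex_derive_factor m x : forall j,
  ex_derive (fun t => if Nat.eqb j m then 1 else (t - r j) * (t - s j)) x.
Proof. intros j. destruct (Nat.eqb j m). apply ex_derive_const. auto_derive; auto. Qed.

Lemma psi_r_der m x : ex_derive (psi_r m) x.
Proof. unfold psi_r. destruct (Nat.eqb m h).
 - apply (ex_derive_scal (fun t => prodR (h - 1) (fun j => (t - r j) * (t - s j)))).
   apply (prodR_ex_derive (h - 1) (fun j t => (t - r j) * (t - s j))). intros; auto_derive; auto.
 - apply (ex_derive_mult (fun t => c * (t - r h) * (t - s m))
     (fun t => prodR (h - 1) (fun j => if Nat.eqb j m then 1 else (t - r j) * (t - s j)))).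
   auto_derive; auto.
   apply (prodR_ex_derive (h - 1) (fun j t => if Nat.eqb j m then 1 else (t - r j) * (t - s j))).
   apply ex_derive_factor. Qed.

Lemma psi_s_der m x : ex_derive (psi_s m) x.
Proof. unfold psi_s.
 apply (ex_derive_mult (fun t => c * (t - r h) * (t - r m))
     (fun t => prodR (h - 1) (fun j => if Nat.eqb j m then 1 else (t - r j) * (t - s j)))).
 auto_derive; auto.
 apply (prodR_ex_derive (h - 1) (fun j t => if Nat.eqb j m then 1 else (t - r j) * (t - s j))).
 apply ex_derive_factor. Qed.

Lemma crit_axis t0 : Dfun t0 = 0 -> critical_point (Ffun h a b) (0, 0, t0).
Proof. intros HD i Hi. pose proof (g_partial i (0, 0, t0) Hi) as H.
 replace (gfun i (0, 0, t0)) with 0 in H; auto.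
 destruct i as [|[|[|i]]]; try lia.
 - unfold gfun. rewrite (functional_extensionality (fun j => dE 0 (a j) (b j) (0, 0, t0)) (fun _ => 0)).
   symmetry; apply dP_zero. intros; apply dE0_axis.
 - unfold gfun. rewrite (functional_extensionality (fun j => dE 1 (a j) (b j) (0, 0, t0)) (fun _ => 0)).
   symmetry; apply dP_zero. intros; apply dE1_axis.
 - rewrite g2_axis. unfold Gp. rewrite HD. field. lra. Qed.

Lemma sumR_ge_term n f j : (forall k, (1 <= k <= n)%nat -> 0 <= f k) -> (1 <= j <= n)%nat -> f j <= sumR n f.
Proof. induction n; simpl; intros H Hj. lia. destruct (Nat.eq_dec j (S n)).
 subst. assert (0 <= sumR n f) by (apply sumR_nonneg; intros; apply H; lia). lra.
 assert (f j <= sumR n f) by (apply IHn; [intros; apply H; lia | lia]). assert (0 <= f (S n)) by (apply H; lia). lra. Qed.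

Lemma factor_bound y1 y2 t a0 b0 : b0 > 0 ->
  0 <= 3 * Rabs y1 * (y1 ^ 2 + y2 ^ 2) * (2 / b0 ^ 3) <= 1 ->
  0 <= ((t - a0) ^ 2 + b0 ^ 2) ^ 3 * (1 + 3 * (y1 ^ 2 + y2 ^ 2) * (t - a0) ^ 2 / ((t - a0) ^ 2 + b0 ^ 2) ^ 2)
      * (1 - 3 * Rabs y1 * (y1 ^ 2 + y2 ^ 2) * (2 / b0 ^ 3))
  <= Ej a0 b0 ((y1, y2), t).
Proof. intros Hb0 Hn.
 set (u := y1 ^ 2 + y2 ^ 2) in *. set (d := t - a0) in *. set (Q := d ^ 2 + b0 ^ 2) in *.
 set (om := 3 * Rabs y1 * u) in *. set (n := om * (2 / b0 ^ 3)) in *.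
 set (p := 3 * u * d ^ 2 / Q ^ 2).
 assert (Hu : 0 <= u) by (unfold u; assert (0 <= y1^2) by apply pow2_ge_0; assert (0 <= y2^2) by apply pow2_ge_0; lra).
 assert (Hd2 : 0 <= d ^ 2) by apply pow2_ge_0.
 assert (Hb2 : 0 < b0 ^ 2) by (apply pow_lt; lra).
 assert (HQ : b0 ^ 2 <= Q) by (unfold Q; lra).
 assert (HQ3 : b0 ^ 6 <= Q ^ 3).
 { replace (b0 ^ 6) with ((b0 ^ 2) ^ 3) by ring. apply pow_incr; lra. }
 assert (Hom : 0 <= om) by (unfold om; assert (0 <= Rabs y1) by apply Rabs_pos; nra).
 assert (Hp : 0 <= p) by (unfold p; apply Rmult_le_pos; [nra | apply Rlt_le, Rinv_0_lt_compat, pow_lt; lra]).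
 assert (EQ : Q ^ 3 * p = 3 * u * d ^ 2 * Q) by (unfold p; field; lra).
 assert (Hb3 : 0 < b0 ^ 3) by (apply pow_lt; lra).
 assert (HQn : 2 * b0 ^ 3 * om <= Q ^ 3 * n).
 { unfold n. replace (Q ^ 3 * (om * (2 / b0 ^ 3))) with (om * 2 * (Q ^ 3 / b0 ^ 3)) by (field; lra).
   assert (b0 ^ 3 <= Q ^ 3 / b0 ^ 3).
   { apply (Rmult_le_reg_r (b0 ^ 3)); auto. replace (Q ^ 3 / b0 ^ 3 * b0 ^ 3) with (Q ^ 3) by (field; lra).
     replace (b0 ^ 3 * b0 ^ 3) with (b0 ^ 6) by ring. lra. }
   nra. }
 assert (HW : y1 ^ 3 - 3 * y1 * y2 ^ 2 <= om).
 { unfold om, u. assert (0 <= y2^2) by apply pow2_ge_0. assert (0 <= y1^2) by apply pow2_ge_0.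
   unfold Rabs; destruct (Rcase_abs y1); nra. }
 assert (EjE : Ej a0 b0 ((y1, y2), t) = Q ^ 3 + 3 * u * d ^ 2 * Q + 3 * u ^ 2 * d ^ 2 + u ^ 3
    - 2 * b0 ^ 3 * (y1 ^ 3 - 3 * y1 * y2 ^ 2)).
 { unfold Ej, Q, u, d, Defs.c1, Defs.c2, Defs.c3; simpl; ring. }
 assert (HQpos : 0 < Q ^ 3) by (apply pow_lt; lra).
 split.
 - apply Rmult_le_pos. apply Rmult_le_pos; lra. lra.
 - rewrite EjE.
   replace (Q ^ 3 * (1 + p) * (1 - n)) with (Q ^ 3 + Q ^ 3 * p - Q ^ 3 * n - (Q ^ 3 * p) * n) by ring.
   rewrite EQ.
   assert (0 <= 3 * u * d ^ 2 * Q * n) by (assert (0 <= n) by lra; assert (0 <= 3 * u * d^2 * Q) by nra; nra).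
   assert (0 <= 3 * u ^ 2 * d ^ 2) by nra. assert (0 <= u ^ 3) by (apply pow_le; auto).
   assert (2 * b0 ^ 3 * (y1 ^ 3 - 3 * y1 * y2 ^ 2) <= 2 * b0 ^ 3 * om) by nra.
   lra. Qed.

Lemma prodQ3 t : prodR h (fun j => ((t - a j) ^ 2 + b j ^ 2) ^ 3) = (P t / kappa) ^ 3.
Proof. rewrite (prodR_pow3 h (fun j => (t - a j) ^ 2 + b j ^ 2)). rewrite Hfact. f_equal. field. lra. Qed.

Lemma sq_lt_abs x D : x ^ 2 < D ^ 2 -> 0 < D -> Rabs x < D.
Proof. intros H HD. destruct (Rlt_or_le (Rabs x) D); auto.
 assert (D ^ 2 <= Rabs x ^ 2) by (apply pow_incr; lra).
 rewrite RPow_abs, Rabs_pos_eq in H1 by apply pow2_ge_0. lra. Qed.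

Lemma F_locmin m : (1 <= m <= h)%nat -> local_min (Ffun h a b) (0, 0, r m).
Proof. intros Hm. set (r0 := r m).
 destruct (exists_a_ne r0) as [j0 [Hj0 Ha0]].
 set (gam := Rabs (r0 - a j0)).
 assert (Hgam : gam > 0) by (apply Rabs_pos_lt; lra).
 set (b0 := b j0). assert (Hb0 : b0 > 0) by (apply Hb; auto).
 set (M := b0 ^ 2 + 9 / 4 * gam ^ 2).
 assert (HM : M > 0) by (unfold M; assert (0 < b0^2) by (apply pow_lt; lra); assert (0 <= gam^2) by apply pow2_ge_0; lra).
 set (del0 := gam ^ 2 / 4 / M ^ 2).
 assert (Hdel0 : del0 > 0) by (unfold del0; assert (0 < gam^2) by (apply pow_lt; lra);
   assert (0 < M^2) by (apply pow_lt; lra); apply Rdiv_lt_0_compat; lra).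
 set (C := sumR h (fun j => 2 / b j ^ 3)).
 assert (HCt : forall j, (1 <= j <= h)%nat -> 0 <= 2 / b j ^ 3).
 { intros j Hj. assert (0 < b j ^ 3) by (apply pow_lt; apply Hb; auto). apply Rlt_le, Rdiv_lt_0_compat; lra. }
 assert (HC : C > 0).
 { assert (0 < 2 / b 1%nat ^ 3) by (assert (0 < b 1%nat ^ 3) by (apply pow_lt; apply Hb; lia); apply Rdiv_lt_0_compat; lra).
   assert (2 / b 1%nat ^ 3 <= C) by (apply (sumR_ge_term h (fun j => 2 / b j ^ 3) 1); auto; lia). lra. }
 pose proof (DeltaP_pos m Hm) as HDP.
 set (Del := Rmin (Rmin 1 (del0 / (3 * C))) (Rmin (Rmin (1 / (6 * C)) (DeltaP m)) (gam / 2))).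
 assert (HDel : Del > 0).
 { unfold Del. repeat apply Rmin_glb_lt; try lra; apply Rdiv_lt_0_compat; lra. }
 assert (HD1 : Del <= 1) by (unfold Del; eapply Rle_trans; [apply Rmin_l | apply Rmin_l]).
 assert (HD2 : Del <= del0 / (3 * C)) by (unfold Del; eapply Rle_trans; [apply Rmin_l | apply Rmin_r]).
 assert (HD3 : Del <= 1 / (6 * C)) by (unfold Del; eapply Rle_trans; [apply Rmin_r | eapply Rle_trans; [apply Rmin_l | apply Rmin_l]]).
 assert (HD4 : Del <= DeltaP m) by (unfold Del; eapply Rle_trans; [apply Rmin_r | eapply Rle_trans; [apply Rmin_l | apply Rmin_r]]).
 assert (HD5 : Del <= gam / 2) by (unfold Del; eapply Rle_trans; [apply Rmin_r | apply Rmin_r]).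
 exists Del. split; auto. intros [[y1 y2] t] Hy.
 unfold Defs.dist, Defs.dist2, Defs.c1, Defs.c2, Defs.c3 in Hy; cbn [fst snd] in Hy.
 set (z := (y1 - 0) ^ 2 + (y2 - 0) ^ 2 + (t - r0) ^ 2) in Hy.
 assert (Hz0 : 0 <= z) by (unfold z; assert (0 <= (y1-0)^2) by apply pow2_ge_0;
   assert (0 <= (y2-0)^2) by apply pow2_ge_0; assert (0 <= (t - r0)^2) by apply pow2_ge_0; lra).
 assert (Hz : z < Del ^ 2).
 { pose proof (sqrt_sqrt z Hz0). pose proof (sqrt_pos z). assert (sqrt z * sqrt z < Del * Del) by (apply Rmult_le_0_lt_compat; lra). simpl. lra. }
 unfold z in Hz.
 assert (Hy1s : 0 <= y1 ^ 2) by apply pow2_ge_0. assert (Hy2s : 0 <= y2 ^ 2) by apply pow2_ge_0.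
 assert (Hts : 0 <= (t - r0) ^ 2) by apply pow2_ge_0.
 replace ((y1 - 0) ^ 2) with (y1 ^ 2) in Hz by ring. replace ((y2 - 0) ^ 2) with (y2 ^ 2) in Hz by ring.
 set (u := y1 ^ 2 + y2 ^ 2) in *.
 assert (Hu0 : 0 <= u) by (unfold u; lra).
 assert (HDel2 : Del ^ 2 <= 1) by (simpl; nra).
 assert (Hu1 : u <= 1) by lra.
 assert (Hay1 : Rabs y1 < Del) by (apply sq_lt_abs; auto; unfold u in Hz; lra).
 assert (Hat : Rabs (t - r0) < Del) by (apply sq_lt_abs; auto; unfold u in Hz; lra).
 pose proof (Rabs_pos y1) as Hay0.
 set (om := 3 * Rabs y1 * u).
 assert (Hom : 0 <= om) by (unfold om; nra).
 set (nu := om * C).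
 assert (Hnu1 : nu <= u * del0).
 { unfold nu, om. assert (Rabs y1 * (3 * C) <= del0).
   { assert (Rabs y1 < del0 / (3 * C)) by lra. apply (Rmult_lt_compat_r (3 * C)) in H; [|lra].
     replace (del0 / (3 * C) * (3 * C)) with del0 in H by (field; lra). lra. }
   nra. }
 assert (Hnu2 : nu <= 1 / 2).
 { unfold nu, om. assert (Rabs y1 * (6 * C) <= 1).
   { assert (Rabs y1 < 1 / (6 * C)) by lra. apply (Rmult_lt_compat_r (6 * C)) in H; [|lra].
     replace (1 / (6 * C) * (6 * C)) with 1 in H by (field; lra). lra. }
   nra. }
 assert (Hnu0 : 0 <= nu) by (unfold nu; nra).
 assert (Hsum : sumR h (fun j => om * (2 / b j ^ 3)) = nu) by (unfold nu, C; apply sumR_scal).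
 assert (Hnj : forall j, (1 <= j <= h)%nat -> 0 <= om * (2 / b j ^ 3) <= 1).
 { intros j Hj. split. apply Rmult_le_pos; auto.
   assert (om * (2 / b j ^ 3) <= sumR h (fun j => om * (2 / b j ^ 3))).
   { apply (sumR_ge_term h (fun j => om * (2 / b j ^ 3)) j); auto. intros; apply Rmult_le_pos; auto. }
   lra. }
 rewrite (F_eq h a b (y1, y2, t)).
 set (q3 := fun j => ((t - a j) ^ 2 + b j ^ 2) ^ 3).
 set (pp := fun j => 1 + 3 * u * (t - a j) ^ 2 / ((t - a j) ^ 2 + b j ^ 2) ^ 2).
 set (nn := fun j => 1 - om * (2 / b j ^ 3)).
 assert (Hlow : prodR h (fun j => q3 j * pp j * nn j) <= prodR h (fun j => Ej (a j) (b j) (y1, y2, t))).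
 { apply prodR_le. intros j Hj. unfold q3, pp, nn, om.
   replace (3 * Rabs y1 * u * (2 / b j ^ 3)) with (3 * Rabs y1 * (y1 ^ 2 + y2 ^ 2) * (2 / b j ^ 3)) by reflexivity.
   apply factor_bound. apply Hb; auto. apply (Hnj j Hj). }
 rewrite (prodR_mult h (fun j => q3 j * pp j) nn) in Hlow.
 rewrite (prodR_mult h q3 pp) in Hlow.
 unfold q3 in Hlow. rewrite prodQ3 in Hlow.
 assert (Hpp : forall j, (1 <= j <= h)%nat -> pp j >= 1).
 { intros j Hj. unfold pp. assert (0 < b j ^ 2) by (apply pow_lt; apply Hb; auto).
   assert (0 < ((t - a j) ^ 2 + b j ^ 2) ^ 2) by (apply pow_lt; assert (0 <= (t - a j)^2) by apply pow2_ge_0; lra).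
   assert (0 <= 3 * u * (t - a j) ^ 2 / ((t - a j) ^ 2 + b j ^ 2) ^ 2).
   { apply Rmult_le_pos. assert (0 <= (t - a j)^2) by apply pow2_ge_0. nra. apply Rlt_le, Rinv_0_lt_compat; auto. }
   lra. }
 assert (HPP : prodR h pp >= pp j0).
 { rewrite (prodR_extract h pp j0 Hj0).
   assert (prodR h (fun j => if Nat.eqb j j0 then 1 else pp j) >= 1).
   { apply prodR_ge1. intros j Hj. destruct (Nat.eqb j j0). lra. apply Hpp; auto. }
   pose proof (Hpp j0 Hj0). nra. }
 assert (HNN : prodR h nn >= 1 - nu).
 { unfold nn. rewrite <- Hsum. apply (prodR_weier h (fun j => om * (2 / b j ^ 3))).
   intros; apply Hnj; auto. lra. }
 set (d0 := t - a j0).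
 assert (Hd0a : gam / 2 <= Rabs d0).
 { unfold d0. replace (t - a j0) with ((r0 - a j0) - (r0 - t)) by ring.
   pose proof (Rabs_triang_inv (r0 - a j0) (r0 - t)). rewrite Rabs_minus_sym in Hat. fold gam in H. lra. }
 assert (Hd0b : Rabs d0 <= 3 / 2 * gam).
 { unfold d0. replace (t - a j0) with ((t - r0) + (r0 - a j0)) by ring.
   pose proof (Rabs_triang (t - r0) (r0 - a j0)). fold gam in H. lra. }
 assert (Hd0sq : gam ^ 2 / 4 <= d0 ^ 2).
 { replace (d0 ^ 2) with (Rabs d0 ^ 2) by (rewrite RPow_abs; rewrite Rabs_pos_eq; auto; apply pow2_ge_0).
   replace (gam ^ 2 / 4) with ((gam / 2) ^ 2) by field. apply pow_incr. lra. }
 assert (Hd0sq2 : d0 ^ 2 <= 9 / 4 * gam ^ 2).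
 { replace (d0 ^ 2) with (Rabs d0 ^ 2) by (rewrite RPow_abs; rewrite Rabs_pos_eq; auto; apply pow2_ge_0).
   replace (9 / 4 * gam ^ 2) with ((3 / 2 * gam) ^ 2) by field. apply pow_incr. split; auto; apply Rabs_pos. }
 assert (Hratio : del0 <= d0 ^ 2 / (d0 ^ 2 + b0 ^ 2) ^ 2).
 { unfold del0. assert (0 < b0 ^ 2) by (apply pow_lt; lra).
   assert (HQ0 : 0 < d0 ^ 2 + b0 ^ 2) by (assert (0 <= d0^2) by apply pow2_ge_0; lra).
   assert (HQM : d0 ^ 2 + b0 ^ 2 <= M) by (unfold M; lra).
   unfold Rdiv. apply Rmult_le_compat. assert (0 < gam ^2) by (apply pow_lt; lra). lra.
   apply Rlt_le, Rinv_0_lt_compat, pow_lt; lra. lra.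
   apply Rinv_le_contravar. apply pow_lt; lra. apply pow_incr; lra. }
 assert (Hpj0 : pp j0 >= 1 + 3 * u * del0).
 { unfold pp. fold d0. fold b0.
   replace (3 * u * d0 ^ 2 / (d0 ^ 2 + b0 ^ 2) ^ 2) with (3 * u * (d0 ^ 2 / (d0 ^ 2 + b0 ^ 2) ^ 2)) by
     (field; assert (0 < b0^2) by (apply pow_lt; lra); assert (0 <= d0^2) by apply pow2_ge_0;
      lra).
   nra. }
 assert (HPt : P r0 <= P t).
 { apply P_locmin; auto. fold r0. lra. }
 rewrite F_axis.
 assert (HG0 : 0 < P r0 / kappa) by (apply Rdiv_lt_0_compat; auto; apply Hpos).
 assert (HG : (P r0 / kappa) ^ 3 <= (P t / kappa) ^ 3).
 { apply pow_incr. split; [lra|]. unfold Rdiv. apply Rmult_le_compat_r; auto.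
   apply Rlt_le, Rinv_0_lt_compat; auto. }
 assert (HG3 : 0 < (P r0 / kappa) ^ 3) by (apply pow_lt; auto).
 assert (Hprod : prodR h pp * prodR h nn >= 1).
 { assert (pp j0 * (1 - nu) >= 1) by nra. nra. }
 nra. Qed.

Lemma triple_eq (x1 x2 x3 y1 y2 y3 : R) : x1 = y1 -> x2 = y2 -> x3 = y3 -> (x1, x2, x3) = (y1, y2, y3).
Proof. intros; subst; auto. Qed.

Lemma det_Hd t0 : det3 (Hd t0) = alpha t0 * alpha t0 * Hm t0 2 2.
Proof. unfold det3, Hd. simpl. ring. Qed.

Lemma H22_r m : (1 <= m <= h)%nat -> Hm (r m) 2 2 > 0.
Proof. intros Hm0. rewrite (H22_val (r m) (psi_r m)); [| intros; apply D_dec_r; auto | apply psi_r_der].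
 pose proof (psi_r_pos m (r m) Hm0 (SideR_rm m Hm0)).
 assert (0 < P (r m) / kappa) by (apply Rdiv_lt_0_compat; auto; apply Hpos).
 assert (0 < psi_r m (r m) / kappa) by (apply Rdiv_lt_0_compat; auto).
 assert (0 < (P (r m) / kappa) ^ 2) by (apply pow_lt; auto). nra. Qed.

Lemma H22_s m : (1 <= m <= h - 1)%nat -> Hm (s m) 2 2 < 0.
Proof. intros Hm0. rewrite (H22_val (s m) (psi_s m)); [| intros; apply D_dec_s; auto | apply psi_s_der].
 pose proof (psi_s_neg m Hm0).
 assert (0 < P (s m) / kappa) by (apply Rdiv_lt_0_compat; auto; apply Hpos).
 assert (psi_s m (s m) / kappa < 0) by (unfold Rdiv; assert (0 < / kappa) by (apply Rinv_0_lt_compat; auto); nra).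
 assert (0 < (P (s m) / kappa) ^ 2) by (apply pow_lt; auto). nra. Qed.

Lemma nondeg_r m : (1 <= m <= h)%nat -> nondegenerate_critical_point (Ffun h a b) (0, 0, r m).
Proof. intros Hm0. split. apply crit_axis. rewrite (D_dec_r m (r m) Hm0). ring.
 exists (Hd (r m)). split. apply hess_axis. rewrite det_Hd.
 pose proof (alpha_pos (r m)). pose proof (H22_r m Hm0).
 assert (0 < alpha (r m) * alpha (r m) * Hm (r m) 2 2) by (apply Rmult_lt_0_compat; auto; apply Rmult_lt_0_compat; auto).
 lra. Qed.

Lemma nondeg_s m : (1 <= m <= h - 1)%nat -> nondegenerate_critical_point (Ffun h a b) (0, 0, s m).
Proof. intros Hm0. split. apply crit_axis. rewrite (D_dec_s m (s m) Hm0). ring.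
 exists (Hd (s m)). split. apply hess_axis. rewrite det_Hd.
 pose proof (alpha_pos (s m)). pose proof (H22_s m Hm0).
 assert (0 < alpha (s m) * alpha (s m)) by (apply Rmult_lt_0_compat; auto). nra. Qed.

Lemma index_s m : (1 <= m <= h - 1)%nat -> negativity_index (Ffun h a b) (0, 0, s m) 1.
Proof. intros Hm0. exists (Hd (s m)). split. apply hess_axis.
 pose proof (alpha_pos (s m)). pose proof (H22_s m Hm0).
 exists e, (fun k => Hd (s m) k k). split; [|split].
 - intros k l Hk Hl. destruct k as [|[|[|k]]]; destruct l as [|[|[|l]]]; try lia;
   unfold dot, e, Defs.c1, Defs.c2, Defs.c3; simpl; ring.
 - intros k Hk. destruct k as [|[|[|k]]]; try lia;
   unfold matvec, vscale, Hd, e, Defs.c1, Defs.c2, Defs.c3; simpl; apply triple_eq; ring.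
 - unfold is_neg, Hd. simpl.
   destruct (Rlt_dec (alpha (s m)) 0); try lra. destruct (Rlt_dec (Hm (s m) 2 2) 0); try lra. reflexivity. Qed.

Lemma F_nonneg y : 0 <= Ffun h a b y.
Proof. unfold Ffun. apply Rge_le, prodR_nonneg; intros; apply prodR_nonneg; intros.
 unfold dist2. apply Rle_ge.
 assert (0 <= (Defs.c1 y - Defs.c1 (wpt a b j j0)) ^ 2) by apply pow2_ge_0.
 assert (0 <= (Defs.c2 y - Defs.c2 (wpt a b j j0)) ^ 2) by apply pow2_ge_0.
 assert (0 <= (Defs.c3 y - Defs.c3 (wpt a b j j0)) ^ 2) by apply pow2_ge_0. lra. Qed.

Lemma F_wpt j i : (1 <= j <= h)%nat -> (1 <= i <= 3)%nat -> Ffun h a b (wpt a b j i) = 0.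
Proof. intros Hj Hi. unfold Ffun. apply (prodR_zero h _ j); auto.
 apply (prodR_zero 3 _ i); auto. unfold dist2; ring. Qed.

Lemma sq0 x : x ^ 2 = 0 -> x = 0.
Proof. intros H. destruct (Req_dec x 0); auto. exfalso; apply (pow_nonzero x 2); auto. Qed.

Lemma dist2_zero y w : dist2 y w = 0 -> y = w.
Proof. destruct y as [[y1 y2] y3]; destruct w as [[w1 w2] w3].
 unfold dist2, Defs.c1, Defs.c2, Defs.c3; cbn [fst snd]. intros H.
 assert (0 <= (y1 - w1) ^ 2) by apply pow2_ge_0.
 assert (0 <= (y2 - w2) ^ 2) by apply pow2_ge_0.
 assert (0 <= (y3 - w3) ^ 2) by apply pow2_ge_0.
 assert (E1 : (y1 - w1) ^ 2 = 0) by lra. assert (E2 : (y2 - w2) ^ 2 = 0) by lra.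
 assert (E3 : (y3 - w3) ^ 2 = 0) by lra.
 apply sq0 in E1. apply sq0 in E2. apply sq0 in E3.
 assert (y1 = w1) by lra. assert (y2 = w2) by lra. assert (y3 = w3) by lra. subst; auto. Qed.

Lemma abs_min_iff y : absolute_min (Ffun h a b) y <->
  exists j i, (1 <= j <= h)%nat /\ (1 <= i <= 3)%nat /\ y = wpt a b j i.
Proof. split.
 - intros H. specialize (H (wpt a b 1 1)). rewrite F_wpt in H by lia.
   pose proof (F_nonneg y). assert (Hz : Ffun h a b y = 0) by lra. unfold Ffun in Hz.
   destruct (prodR_zero_inv _ _ Hz) as [j [Hj Hz2]].
   destruct (prodR_zero_inv _ _ Hz2) as [i [Hi Hz3]].
   exists j, i. split; auto. split; auto. apply dist2_zero; auto.
 - intros [j [i [Hj [Hi ->]]]] y'. rewrite F_wpt; auto. apply F_nonneg. Qed.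

Lemma not_abs_axis t : ~ absolute_min (Ffun h a b) (0, 0, t).
Proof. intros H. specialize (H (wpt a b 1 1)). rewrite F_wpt, F_axis in H by lia.
 assert (0 < P t / kappa) by (apply Rdiv_lt_0_compat; auto; apply Hpos).
 assert (0 < (P t / kappa) ^ 3) by (apply pow_lt; auto). lra. Qed.

Lemma wpt_distinct j i j' i' : (1 <= j <= h)%nat -> (1 <= i <= 3)%nat ->
     (1 <= j' <= h)%nat -> (1 <= i' <= 3)%nat ->
     (j, i) <> (j', i') -> wpt a b j i <> wpt a b j' i'.
Proof. intros Hj Hi Hj' Hi' Hne Heq. unfold wpt in Heq. injection Heq as E1 E2 E3.
 assert (Hbj : b j > 0) by (apply Hb; auto). assert (Hbj' : b j' > 0) by (apply Hb; auto).
 assert (Hsq : forall (x th : R), (x * cos th) ^ 2 + (x * sin th) ^ 2 = x ^ 2).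
 { intros x th. pose proof (sin2_cos2 th) as Hs. unfold Rsqr in Hs.
   transitivity (x ^ 2 * (sin th * sin th + cos th * cos th)). ring. rewrite Hs; ring. }
 assert (Hb2 : b j ^ 2 = b j' ^ 2).
 { rewrite <- (Hsq (b j) (2 * PI * INR i / 3)), <- (Hsq (b j') (2 * PI * INR i' / 3)). rewrite E1, E2. reflexivity. }
 assert (Hbe : b j = b j') by nra.
 destruct (Nat.eq_dec j j') as [Hjj | Hjj].
 - subst j'. assert (Hii : i <> i') by (intros ->; apply Hne; auto).

   apply Rmult_eq_reg_l in E1; [|lra]. apply Rmult_eq_reg_l in E2; [|lra].
   pose proof (sqrt_lt_R0 3 ltac:(lra)).
   destruct i as [|[|[|[|i]]]]; try lia; destruct i' as [|[|[|[|i']]]]; try lia; simpl INR in E1, E2;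
   try (destruct trig1 as [T1 T2]); try (destruct trig2 as [T3 T4]); try (destruct trig3 as [T5 T6]);
   try rewrite T1 in *; try rewrite T2 in *; try rewrite T3 in *; try rewrite T4 in *;
   try rewrite T5 in *; try rewrite T6 in *; lra.
 - apply (MC.distinct_Q h r s P c kappa a b (Rgt_not_eq _ _ Hc) (Rgt_not_eq _ _ Hkappa) Hder Hfact j j'); try lia; auto. apply Rgt_not_eq; auto. Qed.

Lemma main_all :
  (forall j i j' i', (1 <= j <= h)%nat -> (1 <= i <= 3)%nat ->
     (1 <= j' <= h)%nat -> (1 <= i' <= 3)%nat ->
     (j, i) <> (j', i') -> wpt a b j i <> wpt a b j' i')
  /\
  (forall j, (1 <= j <= h)%nat ->
     nondegenerate_critical_point (Ffun h a b) (0, 0, r j) /\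
     local_min (Ffun h a b) (0, 0, r j) /\
     ~ absolute_min (Ffun h a b) (0, 0, r j))
  /\
  (forall j, (1 <= j <= h - 1)%nat ->
     nondegenerate_critical_point (Ffun h a b) (0, 0, s j) /\
     negativity_index (Ffun h a b) (0, 0, s j) 1)
  /\
  (forall y, absolute_min (Ffun h a b) y <->
     exists j i, (1 <= j <= h)%nat /\ (1 <= i <= 3)%nat /\ y = wpt a b j i).
Proof.
 split; [|split; [|split]].
 - intros; apply wpt_distinct; auto.
 - intros j Hj. split; [apply nondeg_r; auto | split; [apply F_locmin; auto | apply not_abs_axis]].
 - intros j Hj. split; [apply nondeg_s; auto | apply index_s; auto].
 - apply abs_min_iff. Qed.
End Main.

Theorem proposition8p1
  (h : nat) (Hh : (2 <= h)%nat)
  (r s : nat -> R)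
  (Hord : forall j, (1 <= j <= h - 1)%nat -> r j < s j /\ s j < r (S j))
  (P : R -> R)
  (Hpoly : exists p : nat -> R, p (2 * h)%nat > 0 /\
             forall x, P x = sum_f_R0 (fun k => p k * x ^ k) (2 * h))
  (Hpos : forall x, P x > 0)
  (c : R) (Hc : c > 0)
  (Hder : forall x, derivable_pt_lim P x
            (c * (x - r h) * prodR (h - 1) (fun j => (x - r j) * (x - s j))))
  (kappa : R) (a b : nat -> R) (Hkappa : kappa > 0)
  (Hb : forall j, (1 <= j <= h)%nat -> b j > 0)
  (Hfact : forall x, P x = kappa * prodR h (fun j => (x - a j) ^ 2 + b j ^ 2)) :
  (forall j i j' i', (1 <= j <= h)%nat -> (1 <= i <= 3)%nat ->
     (1 <= j' <= h)%nat -> (1 <= i' <= 3)%nat ->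
     (j, i) <> (j', i') -> wpt a b j i <> wpt a b j' i')
  /\
  (forall j, (1 <= j <= h)%nat ->
     nondegenerate_critical_point (Ffun h a b) (0, 0, r j) /\
     local_min (Ffun h a b) (0, 0, r j) /\
     ~ absolute_min (Ffun h a b) (0, 0, r j))
  /\
  (forall j, (1 <= j <= h - 1)%nat ->
     nondegenerate_critical_point (Ffun h a b) (0, 0, s j) /\
     negativity_index (Ffun h a b) (0, 0, s j) 1)
  /\
  (forall y, absolute_min (Ffun h a b) y <->
     exists j i, (1 <= j <= h)%nat /\ (1 <= i <= 3)%nat /\ y = wpt a b j i).
Proof.
 intros. apply (main_all h r s P c kappa a b); auto.
Qed.
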